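(* Let $\pi$ be a probability measure on $\mathsf{X}$, and for each $x\in\mathsf{X}$ let $Q_{x}$ be the law of a random variable $W=\prod_{t=1}^{T}W_{t}$, where $W_{1},\dots,W_{T}$ are independent and nonnegative and each $W_{t}=\frac{1}{N}\sum_{i=1}^{N}W_{t,i}$ is an average of nonnegative, independent and identically distributed random variables $W_{t,1},\dots,W_{t,N}$ with mean $1$ (their laws may depend on $x$). Let $\tilde{\pi}_{x}(\mathrm{d}w):=wQ_{x}(\mathrm{d}w)$. Assume that for some integer $p\ge2$ and every $x\in\mathsf{X}$, $\max_{t\in\{1,\dots,T\}}\mathbb{E}[W_{t,1}^{p}]<\infty$. Then there exists a function $M_{p}:\mathsf{X}\to\mathbb{R}_{+}$ such that if \[ N\ge\alpha T+\tfrac{1}{2}+\sqrt{\alpha T} \] for some $\alpha>0$, then for all $s>0$, \[ \int\pi(\mathrm{d}x)\,\tilde{\pi}_{x}(W\ge s)\le s^{-p+1}\int\pi(\mathrm{d}x)\exp\Big(\frac{M_{p}(x)}{\alpha}\Big). \]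
   Context: $\mathbb{R}_{+}=(0,\infty)$. The expectation $\mathbb{E}[W_{t,1}^{p}]$ is under the law determined by $x$. *)

(* Defs.v *)
From HB Require Import structures.
From mathcomp Require Import all_boot all_order all_algebra.
From mathcomp Require Import all_classical all_reals all_analysis.
Set Implicit Arguments. Unset Strict Implicit. Unset Printing Implicit Defensive.
Import Order.TTheory GRing.Theory Num.Theory.
Local Open Scope classical_set_scope.
Local Open Scope ring_scope.

(* Mutual independence of a finite family of real random variables:
   product rule for every family of Borel sets (taking B i = setT for the
   indices left out gives the product rule for every finite subfamily). *)
Definition mutually_independent d (Omega : measurableType d) (R : realType)
  (I : finType) (P : probability Omega R) (Y : I -> Omega -> R) : Prop :=
  forall B : I -> set R, (forall i, measurable (B i)) ->
    P (\bigcap_(i in [set: I]) (Y i @^-1` B i)) =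
    (\prod_(i : I) fine (P (Y i @^-1` B i)))%:E.

Definition has_law d (Omega : measurableType d) (R : realType)
  (P : probability Omega R) (Y : Omega -> R) (mu : probability R R) : Prop :=
  forall B : set R, measurable B -> P (Y @^-1` B) = mu B.

Definition Wprod (R : realType) (Omega : Type) (T N : nat)
  (W : 'I_T -> 'I_N -> Omega -> R) (w : Omega) : R :=
  \prod_(t < T) ((N%:R)^-1 * \sum_(i < N) W t i w).

(* tilde pi_x (W >= s) = int_{w >= s} w Q_x(dw) = E[W 1{W >= s}] *)
Definition tilted_tail d (Omega : measurableType d) (R : realType)
  (P : probability Omega R) (Wv : Omega -> R) (s : R) : \bar R :=
  (\int[P]_(w in [set w | (s <= Wv w)%R]) (Wv w)%:E)%E.

(* Main.v *)
Require Import Defs.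
From HB Require Import structures.
From mathcomp Require Import all_boot all_order all_algebra.
From mathcomp Require Import all_classical all_reals all_analysis.
From mathcomp Require Import ring lra.
From mathcomp Require Import measurable_realfun.
Import Order.TTheory GRing.Theory Num.Theory.
Import numFieldTopology.Exports numFieldNormedType.Exports.
Local Open Scope classical_set_scope.
Local Open Scope ring_scope.
Set Implicit Arguments. Unset Strict Implicit.
Import HBNNSimple.
Local Open Scope ereal_scope.
Lemma outer_le d (T : measurableType d) (R : realType) (mu : measure T R)
  (f g : T -> \bar R) (c : R) : (0 < c)%R -> (forall x, 0 <= f x) ->
  (forall x, 0 <= g x) -> (forall x, f x <= c%:E * g x) ->
  \int[mu]_x f x <= c%:E * \int[mu]_x g x.
Proof.
move=> c0 f0 g0 fg; rewrite !ge0_integralTE //=.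
apply: ge_ereal_sup => _ [h /= hf <-].
have ci0 : (0 <= c^-1)%R by rewrite invr_ge0 ltW.
pose h' := scale_nnsfun h ci0.
have -> : sintegral mu h = sintegral mu (cst c \* h')%R.
  apply: eq_sintegral => x /=; rewrite mulrA mulfV ?mul1r //; exact: lt0r_neq0.
rewrite sintegralrM; apply: lee_wpmul2l; first by rewrite lee_fin ltW.
apply: ereal_sup_ubound => /=; exists h' => //= x.
have := le_trans (hf x) (fg x).
case: (g x) (g0 x) => [r| |] //= r0; last by rewrite leey.
rewrite !lee_fin => hx; rewrite ler_pdivrMl //.
Qed.

Local Close Scope ereal_scope.

Definition mult (p N : nat) (f : {ffun 'I_p -> 'I_N}) (i : 'I_N) : nat :=
  #|[set j | f j == i]%SET|.
Arguments mult {p N}.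

Lemma mult_sum p N (f : {ffun 'I_p -> 'I_N}) : (\sum_i mult f i)%N = p.
Proof.
rewrite /mult.
transitivity (\sum_(j < p) 1)%N; last by rewrite sum1_card card_ord.
rewrite (partition_big (fun j => f j) xpredT) //=.
apply: eq_bigr => i _; rewrite -sum1_card; apply: eq_bigl => j /=. by rewrite inE.
Qed.

Lemma mult_le p N (f : {ffun 'I_p -> 'I_N}) i : (mult f i <= p)%N.
Proof. by apply: leq_trans (max_card _) _; rewrite card_ord. Qed.

Lemma mult_inj p N (f : {ffun 'I_p -> 'I_N}) i :
  injectiveb f -> (mult f i <= 1)%N.
Proof.
move=> /injectiveP fi; apply/card_le1_eqP => j k; rewrite !inE => /eqP fj /eqP fk.
by apply: fi; rewrite fj fk.
Qed.

Lemma prod_regroup (R : comPzRingType) p N (a : 'I_N -> R) (f : {ffun 'I_p -> 'I_N}) :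
  \prod_(j < p) a (f j) = \prod_i a i ^+ mult f i.
Proof.
rewrite (partition_big (fun j => f j) xpredT) //=.
apply: eq_bigr => i _.
rewrite /mult -prodr_const.
apply: eq_big => [j|j /eqP -> //]; by rewrite inE.
Qed.

Lemma powsum (R : comPzRingType) p N (a : 'I_N -> R) :
  (\sum_i a i) ^+ p = \sum_(f : {ffun 'I_p -> 'I_N}) \prod_i a i ^+ mult f i.
Proof.
have -> : (\sum_i a i) ^+ p = \prod_(j < p) \sum_i a i.
  by rewrite prodr_const card_ord.
rewrite bigA_distr_bigA; apply: eq_bigr => f _; exact: prod_regroup.
Qed.

Lemma ffact_le_expn N p : (N ^_ p <= N ^ p)%N.
Proof.
elim: p => [|p IH] //; rewrite ffactnSr expnSr leq_mul //; exact: leq_subr.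
Qed.

Lemma noninj_bound (R : realFieldType) (N p : nat) :
  N%:R * ((N ^ p)%:R - (N ^_ p)%:R) <= p%:R ^+ 2 * N%:R ^+ p :> R.
Proof.
elim: p => [|p IH]; first by rewrite expn0 ffactn0 subrr mulr0 expr0n /= mul0r.
have a0 : 0 <= (N ^_ p)%:R :> R by [].
have aN : (N ^_ p)%:R <= N%:R ^+ p :> R.
  by rewrite -natrX ler_nat ffact_le_expn.
have e1 : (N ^_ p.+1)%:R >= (N ^_ p)%:R * (N%:R - p%:R) :> R.
  rewrite ffactnSr natrM ler_wpM2l //.
  case: (leqP p N) => h; first by rewrite natrB.
  apply: le_trans (ler0n _ _); rewrite subr_le0 ler_nat ltnW //.
have N0 : 0 <= N%:R :> R by [].
rewrite !natrX in IH; rewrite !natrX.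
set y := N%:R ^+ p in IH aN *; set a := (N ^_ p)%:R in a0 aN e1 IH *.
set a' := (N ^_ p.+1)%:R in e1 *; set n := N%:R in N0 IH e1 *.
have hp : 0 <= p%:R :> R by [].
have -> : n ^+ p.+1 = n * y by rewrite exprS.
have h2 : (p.+1)%:R ^+ 2 = p%:R ^+ 2 + 2 * p%:R + 1 :> R.
  by rewrite -addn1 natrD; ring.
rewrite h2.
have f1 : n * (n * y - a') <= n * (n * (y - a) + p%:R * a).
  by rewrite ler_wpM2l //; move: e1; nra.
have f2 : n * (n * (y - a)) <= n * (p%:R ^+ 2 * y) by rewrite ler_wpM2l.
have f3 : n * (p%:R * a) <= n * (p%:R * y) by rewrite ler_wpM2l // ler_wpM2l.
have y0 : 0 <= y by apply: le_trans aN.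
have f4 : 0 <= n * y * (p%:R + 1) by rewrite mulr_ge0 // mulr_ge0.
nra.
Qed.

Lemma sum_g_bound (R : realFieldType) (N p : nat) (B : R) (c : nat -> R) :
  1 <= B -> c 0%N = 1 -> c 1%N = 1 ->
  (forall m, (m <= p)%N -> 0 <= c m <= B ^+ m) ->
  N%:R * \sum_(f : {ffun 'I_p -> 'I_N}) \prod_i c (mult f i)
    <= N%:R ^+ p.+1 + B ^+ p * (p%:R ^+ 2 * N%:R ^+ p).
Proof.
move=> B1 c0 c1 cB.
have B0 : 0 <= B by apply: le_trans B1.
have hg (f : {ffun 'I_p -> 'I_N}) : \prod_i c (mult f i) <= if injectiveb f then 1 else B ^+ p.
  case: ifP => inj.
    rewrite big1 // => i _; have := mult_inj i inj.
    by case: (mult f i) => [|[|]].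
  apply: (@le_trans _ _ (\prod_i B ^+ mult f i)).
    by apply: ler_prod => i _; apply: cB; exact: mult_le.
  by rewrite prodrXr mult_sum.
have S1 : \sum_(f : {ffun 'I_p -> 'I_N}) \prod_i c (mult f i) <=
    \sum_(f : {ffun 'I_p -> 'I_N}) (if injectiveb f then 1 else B ^+ p).
  by apply: ler_sum => f _; exact: hg.
have S2 : \sum_(f : {ffun 'I_p -> 'I_N}) (if injectiveb f then 1 else B ^+ p) =
   (#|[set f : {ffun 'I_p -> 'I_N} | injectiveb f]%SET|)%:R +
   B ^+ p * (#|[predC [set f : {ffun 'I_p -> 'I_N} | injectiveb f]%SET]|)%:R.
  rewrite (bigID (fun f => f \in [set f : {ffun 'I_p -> 'I_N} | injectiveb f]%SET)) /=.
  congr (_ + _).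
    rewrite (eq_bigr (fun _ => 1)); last by move=> f; rewrite inE => ->.
    by rewrite sumr_const.
  rewrite (eq_bigr (fun _ => B ^+ p)); last by move=> f; rewrite inE => /negbTE ->.
  by rewrite sumr_const mulr_natr.
have C : (#|[set f : {ffun 'I_p -> 'I_N} | injectiveb f]%SET| +
          #|[predC [set f : {ffun 'I_p -> 'I_N} | injectiveb f]%SET]|)%N = (N ^ p)%N.
  by rewrite cardC card_ffun !card_ord.
rewrite card_inj_ffuns !card_ord in S2 C.
have C' : (#|[predC [set f : {ffun 'I_p -> 'I_N} | injectiveb f]%SET]|)%:R =
   (N ^ p)%:R - (N ^_ p)%:R :> R.
  by rewrite -C natrD addrC addKr.
rewrite C' in S2.
have nb := noninj_bound R N p.
have aN : (N ^_ p)%:R <= (N ^ p)%:R :> R by rewrite ler_nat ffact_le_expn.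
have N0 : 0 <= N%:R :> R by [].
apply: le_trans (ler_wpM2l N0 S1) _.
rewrite S2 mulrDr exprS natrX.
rewrite natrX in aN nb.
apply: lerD; first by rewrite ler_wpM2l.
by rewrite mulrCA; apply: ler_wpM2l => //; exact: exprn_ge0.
Qed.


Definition cnt (R : realFieldType) (L : nat) (x : R) : R :=
  \sum_(j < L) (if (j.+1)%:R <= x then 1 else 0).

Lemma cnt_prop (R : realFieldType) (L : nat) (x : R) :
  [/\ 0 <= cnt L x, (0 <= x -> cnt L x <= x), (L%:R <= x -> cnt L x = L%:R)
    & (x <= L%:R -> x - 1 <= cnt L x)].
Proof.
elim: L => [|L [IH0 IH1 IH2 IH3]].
  rewrite /cnt big_ord0; split => //; lra.
have cS : cnt L.+1 x = cnt L x + (if (L.+1)%:R <= x then 1 else 0) by rewrite /cnt big_ord_recr.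
rewrite cS; split.
  by rewrite addr_ge0 //; case: ifP.
  move=> x0; case: (boolP ((L.+1)%:R <= x)) => h /=.
    have hL : L%:R <= x by apply: le_trans h; rewrite ler_nat.
    rewrite (IH2 hL) -natr1 in h *; lra.
  by rewrite addr0; exact: IH1.
  move=> h; rewrite h /=.
  have h' : L%:R <= x by apply: le_trans h; rewrite ler_nat.
  by rewrite IH2 // natr1.
  move=> h; case: (boolP ((L.+1)%:R <= x)) => h2 /=.
    have h' : L%:R <= x by apply: le_trans h2; rewrite ler_nat.
    by rewrite IH2 // -natr1 in h2 *; lra.
  rewrite addr0; case: (leP x L%:R) => h3; first exact: IH3.
  by rewrite IH2 ?ltW //; rewrite -natr1 in h; lra.
Qed.

Definition ap (R : realFieldType) (n : nat) (v : R) : R :=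
  (n.+1%:R)^-1 * cnt (n.+1 * n.+1) (n.+1%:R * v).

Lemma ap_ge0 (R : realFieldType) n (v : R) : 0 <= ap n v.
Proof. by rewrite /ap mulr_ge0 // ?invr_ge0 //; case: (cnt_prop (n.+1 * n.+1) (n.+1%:R * v)). Qed.

Lemma ap_le (R : realFieldType) n (v : R) : 0 <= v -> ap n v <= v.
Proof.
move=> v0; rewrite /ap ler_pdivrMl ?ltr0Sn //.
by case: (cnt_prop (n.+1 * n.+1) (n.+1%:R * v)) => _ h _ _; apply: h; rewrite mulr_ge0.
Qed.

Lemma ap_lb (R : realFieldType) n (v : R) : v <= n.+1%:R -> v - (n.+1%:R)^-1 <= ap n v.
Proof.
move=> vn; rewrite /ap.
have k0 : 0 < n.+1%:R :> R by rewrite ltr0Sn.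
case: (cnt_prop (n.+1 * n.+1) (n.+1%:R * v)) => _ _ _ h.
have := h (_ : _ <= _); rewrite natrM ler_pM2l // => /(_ vn) {}h.
rewrite -(ler_pM2l k0) mulrA mulfV ?gt_eqF // mul1r mulrBr mulfV ?gt_eqF //.
Qed.

Lemma ap_cvg (R : realType) (v : R) : 0 <= v -> (fun n => (ap n v : R)) @ \oo --> (v : R).
Proof.
move=> v0.
apply: (@squeeze_cvgr _ _ _ _ (fun n => v - harmonic n) (fun _ => v)).
- near=> n; rewrite ap_le // andbT /harmonic /=; apply: ap_lb.
  apply: le_trans (_ : n%:R <= _); last by rewrite ler_nat.
  near: n; exact: nbhs_infty_ger.
- rewrite -[X in _ --> X]subr0; apply: cvgB; [exact: cvg_cst|exact: cvg_harmonic].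
- exact: cvg_cst.
Unshelve. all: by end_near. Qed.

Lemma cvg_prod_seq (R : realType) (I : Type) (r : seq I) (u : I -> nat -> R)
  (l : I -> R) : (forall i, u i n @[n --> \oo] --> l i) ->
  (\prod_(i <- r) u i n) @[n --> \oo] --> \prod_(i <- r) l i.
Proof.
move=> H; elim: r => [|i r IH].
  under eq_fun do rewrite big_nil. rewrite big_nil; exact: cvg_cst.
under eq_fun do rewrite big_cons. rewrite big_cons; exact: cvgM.
Qed.

Lemma prod_indic (R : realType) (T : Type) (I : finType) (B : I -> set T) w :
  \prod_i \1_(B i) w = \1_(\bigcap_(i in [set: I]) B i) w :> R.
Proof.
rewrite indicE; case: (boolP (w \in \bigcap_(i in [set: I]) B i)) => h.
  rewrite big1 // => i _; rewrite indicE mem_set //.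
  by move/set_mem: h; apply.
have [i ni] : exists i, ~ B i w.
  apply/existsNP => allB; move/negP: h; apply; apply/mem_set => i _.
  exact: allB.
by rewrite (bigD1 i) //= indicE memNset // mul0r.
Qed.

Local Open Scope ereal_scope.

Lemma indep_prod_le d (Omega : measurableType d) (R : realType) (I : finType)
  (P : probability Omega R) (Y : I -> Omega -> R) (phi : I -> R -> R) (c : I -> R) :
  (forall i, measurable_fun setT (Y i)) -> mutually_independent P Y ->
  (forall i, measurable_fun setT (phi i)) -> (forall i y, (0 <= phi i y)%R) ->
  (forall i, \int[P]_w (phi i (Y i w))%:E = (c i)%:E) ->
  \int[P]_w (\prod_i phi i (Y i w))%:E <= (\prod_i c i)%:E.
Proof.
move=> mY ind mphi phi0 hc.
pose k (n : nat) : R := n.+1%:R.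
have k0 n : (0 < k n)%R by rewrite ltr0Sn.
pose A n i (j : 'I_(n.+1 * n.+1)) : set R := [set y | ((j.+1)%:R <= k n * phi i y)%R].
have mA n i j : measurable (A n i j).
  have mf : measurable_fun setT (fun y => k n * phi i y)%R.
    exact: measurable_funM (measurable_cst _) (mphi i).
  have -> : A n i j = (fun y => k n * phi i y)%R @^-1` `[(j.+1)%:R, +oo[%classic.
    by apply/seteqP; split=> y; rewrite /= in_itv /= andbT.
  rewrite -[X in measurable X]setTI; apply: mf => //; exact: measurable_itv.
pose B n i j := Y i @^-1` A n i j.
have mB n i j : measurable (B n i j).
  rewrite /B -[X in measurable X]setTI; by apply: (mY i).
have indB n i j w : \1_(B n i j) w = (if ((j.+1)%:R <= k n * phi i (Y i w))%R then 1 else 0)%R :> R.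
  rewrite indicE; case: ifP => h; first by rewrite mem_set.
  by rewrite memNset //= /B /A /preimage /= h.
have apE n i w : ap n (phi i (Y i w)) = ((k n)^-1 * \sum_j \1_(B n i j) w)%R.
  by rewrite /ap /cnt; congr (_ * _)%R; apply: eq_bigr => j _; rewrite indB.
pose F n w := (\prod_i ((k n)^-1 * \sum_j \1_(B n i j) w))%R.
have Fcv w : F n w @[n --> \oo] --> (\prod_i phi i (Y i w))%R.
  rewrite /F; under eq_fun do under eq_bigr do rewrite -apE.
  by apply: cvg_prod_seq => i; apply: ap_cvg.
have mF n : measurable_fun setT (fun w => (F n w)%:E).
  apply/measurable_EFinP; apply: measurable_prod => i _.
  apply: measurable_funM; first exact: measurable_cst.
  by apply: measurable_sum => j; exact: measurable_indic.
have F0 n w : (0 <= F n w)%R.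
  apply: prodr_ge0 => i _; apply: mulr_ge0; first by rewrite invr_ge0 ltW.
  by apply: sumr_ge0 => j _; rewrite indicE.
pose p n i j := fine (P (B n i j)).
have PB n i j : P (B n i j) = (p n i j)%:E by rewrite fineK //; exact: fin_num_measure.
have hF n : \int[P]_w (F n w)%:E = (\prod_i ((k n)^-1 * \sum_j p n i j))%:E.
  pose S (J : {ffun I -> 'I_(n.+1 * n.+1)}) := \bigcap_(i in [set: I]) B n i (J i).
  have mS J : measurable (S J).
    by apply: fin_bigcap_measurable => //; exact: finite_finset.
  have eF w : F n w = (\sum_J ((\prod_(i : I) (k n)^-1) * \1_(S J) w))%R.
    rewrite /F big_split /= bigA_distr_bigA mulr_sumr.
    by apply: eq_bigr => J _; rewrite prod_indic.
  under eq_integral do rewrite eF -sumEFin.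
  rewrite ge0_integral_sum //; first last.
  - by move=> J w _; rewrite lee_fin mulr_ge0 ?indicE //; apply: prodr_ge0 => i _; rewrite invr_ge0 ltW.
  - move=> J; apply/measurable_EFinP; apply: measurable_funM.
      exact: measurable_cst.
    exact: measurable_indic.
  have cn0 : (0 <= \prod_(i : I) (k n)^-1)%R.
    by apply: prodr_ge0 => i _; rewrite invr_ge0 ltW.
  have hI J : \int[P]_x ((\prod_(i : I) (k n)^-1) * \1_(S J) x)%:E =
      ((\prod_(i : I) (k n)^-1) * fine (P (S J)))%:E.
    under eq_integral do rewrite EFinM.
    rewrite ge0_integralZl_EFin //.
    rewrite integral_indic // setIT EFinM fineK //; first exact: fin_num_measure.
    by apply/measurable_EFinP; exact: measurable_indic.
  rewrite (eq_bigr _ (fun J _ => hI J)) sumEFin; congr EFin.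
  have hS J : fine (P (S J)) = (\prod_i p n i (J i))%R.
    by rewrite /S /B ind // => i; exact: mA.
  rewrite (eq_bigr (fun J : {ffun I -> 'I_(n.+1 * n.+1)} => (\prod_(i : I) (k n)^-1) * \prod_i p n i (J i))%R); last first.
    by move=> J _; congr (_ * _)%R; exact: hS.
  rewrite -mulr_sumr -bigA_distr_bigA -big_split /=.
  by apply: eq_bigr => i _; rewrite mulr_sumr.
have mphiY i : measurable_fun setT (fun w => phi i (Y i w)).
  exact: measurableT_comp (mphi i) (mY i).
have he0 n i : (0 <= (k n)^-1 * \sum_j p n i j)%R.
  apply: mulr_ge0; first by rewrite invr_ge0 ltW.
  by apply: sumr_ge0 => j _; apply: fine_ge0; exact: measure_ge0.
have hap n i : ((k n)^-1 * \sum_j p n i j)%:E =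
    \int[P]_w ((k n)^-1 * \sum_j \1_(B n i j) w)%:E.
  rewrite mulr_sumr -sumEFin.
  under eq_integral do rewrite mulr_sumr -sumEFin.
  rewrite ge0_integral_sum //; first last.
  - by move=> j w _; rewrite lee_fin mulr_ge0 ?indicE // invr_ge0 ltW.
  - move=> j; apply/measurable_EFinP; apply: measurable_funM.
      exact: measurable_cst.
    exact: measurable_indic.
  apply: eq_bigr => j _.
  under eq_integral do rewrite EFinM.
  rewrite ge0_integralZl_EFin ?invr_ge0 ?ltW //; last first.
    by apply/measurable_EFinP; exact: measurable_indic.
  rewrite integral_indic // setIT EFinM /p fineK //; exact: fin_num_measure.
have he n i : ((k n)^-1 * \sum_j p n i j <= c i)%R.
  rewrite -lee_fin hap -hc; apply: ge0_le_integral => //.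
  - by move=> w _; rewrite lee_fin -apE ap_ge0.
  - apply/measurable_EFinP; apply: measurable_funM; first exact: measurable_cst.
    by apply: measurable_sum => j; exact: measurable_indic.
  - by apply/measurable_EFinP.
  - by move=> w _; rewrite lee_fin -apE ap_le.
rewrite (_ : \int[P]_w (\prod_i phi i (Y i w))%:E =
    \int[P]_w limn_einf (fun n => (F n w)%:E)); last first.
  apply: eq_integral => w _; apply/esym; apply: (cvg_limn_einf_sup _).1.
  by apply: cvg_EFin; [near=> n | exact: Fcv].
apply: le_trans (fatou _ _ _ _) _ => //.
  by move=> n w _; rewrite lee_fin.
rewrite limn_einf_lim; apply: lime_le; first exact: is_cvg_einfs.
near=> n.
apply: (@le_trans _ _ (\int[P]_w (F n w)%:E)).
  by apply: ereal_inf_lbound; exists n => /=.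
rewrite hF lee_fin; apply: ler_prod => i _; by rewrite he0 he.
Unshelve. all: by end_near. Qed.

Local Close Scope ereal_scope.


Lemma prod_const_ord (R : comPzRingType) (T : nat) (x : R) : \prod_(t < T) x = x ^+ T.
Proof.
elim: T => [|T IH]; first by rewrite big_ord0 expr0.
by rewrite big_ord_recr /= IH exprSr.
Qed.

Lemma pt_bound (R : realFieldType) (q : nat) (s v Z : R) :
  0 < s -> s <= v -> v <= Z -> v <= s ^- q * Z ^+ q.+1.
Proof.
move=> s0 sv vZ.
have v0 : 0 < v by apply: lt_le_trans sv.
have sq0 : 0 < s ^+ q by apply: exprn_gt0.
rewrite ler_pdivlMl //.
apply: (@le_trans _ _ (v ^+ q.+1)).
  rewrite exprSr; apply: ler_wpM2r; first exact: ltW.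
  have := @lerXn2r R q s v; rewrite !nnegrE => /(_ (ltW s0) (ltW v0) sv).
  done.
have := @lerXn2r R q.+1 v Z; rewrite !nnegrE => /(_ (ltW v0) (le_trans (ltW v0) vZ) vZ).
done.
Qed.

Lemma Wprod_norm (R : realType) (Omega : Type) (T N : nat)
  (W : 'I_T -> 'I_N -> Omega -> R) w :
  `|Wprod W w| <= \prod_t ((N%:R)^-1 * \sum_i `|W t i w|).
Proof.
rewrite /Wprod normr_prod; apply: ler_prod => t _; rewrite normr_ge0 /=.
rewrite normrM ger0_norm ?invr_ge0 // ler_wpM2l ?invr_ge0 //.
exact: ler_norm_sum.
Qed.

Lemma div_bound (R : realFieldType) (n S X : R) (p : nat) : 0 < n ->
  n * S <= n ^+ p.+1 + X * n ^+ p -> (n^-1) ^+ p * S <= 1 + X / n.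
Proof.
move=> n0 h.
have np : 0 < n ^+ p by apply: exprn_gt0.
rewrite exprVn ler_pdivrMl //.
rewrite -(ler_pM2l n0).
have -> : n * (n ^+ p * (1 + X / n)) = n ^+ p.+1 + X * n ^+ p.
  rewrite exprS; field; exact: lt0r_neq0.
exact: h.
Qed.

Local Open Scope ereal_scope.

Lemma per_x d (Omega : measurableType d) (R : realType) (T N q : nat)
  (P : probability Omega R) (W : 'I_T -> 'I_N -> Omega -> R)
  (c : 'I_T -> nat -> R) (B s : R) :
  (0 < N)%N -> (0 < s)%R -> (1 <= B)%R ->
  (forall t i, measurable_fun setT (W t i)) ->
  mutually_independent P (fun ti : 'I_T * 'I_N => W ti.1 ti.2) ->
  (forall t i m, (m <= q.+1)%N -> \int[P]_w ((`|W t i w| ^+ m)%:E) = (c t m)%:E) ->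
  (forall t, c t 0%N = 1%R) -> (forall t, c t 1%N = 1%R) ->
  (forall t m, (m <= q.+1)%N -> (0 <= c t m <= B ^+ m)%R) ->
  tilted_tail P (Wprod W) s <=
    (s ^- q)%:E * ((1 + B ^+ q.+1 * q.+1%:R ^+ 2 / N%:R) ^+ T)%:E.
Proof.
move=> N0 s0 B1 mW ind hc c0 c1 cB.
set p := q.+1.
pose G w := (\prod_t ((N%:R)^-1 * \sum_i `|W t i w|) ^+ p)%R.
have mWp : measurable_fun setT (Wprod W).
  apply: measurable_prod => t _; apply: measurable_funM; first exact: measurable_cst.
  by apply: measurable_sum => i; exact: mW.
have mG : measurable_fun setT G.
  apply: measurable_prod => t _; apply: measurable_funX.
  apply: measurable_funM; first exact: measurable_cst.
  apply: measurable_sum => i; apply: measurableT_comp => //; exact: mW.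
have G0 w : (0 <= G w)%R.
  apply: prodr_ge0 => t _; apply: exprn_ge0; apply: mulr_ge0; first by rewrite invr_ge0.
  by apply: sumr_ge0 => i _.
have mD : measurable [set w | (s <= Wprod W w)%R].
  have -> : [set w | (s <= Wprod W w)%R] = Wprod W @^-1` `[s, +oo[%classic.
    by apply/seteqP; split=> w; rewrite /= in_itv /= andbT.
  rewrite -[X in measurable X]setTI; apply: mWp => //; exact: measurable_itv.
have s0' : (0 <= s ^- q)%R by rewrite invr_ge0 exprn_ge0 // ltW.
rewrite /tilted_tail.
apply: (@le_trans _ _ (\int[P]_(w in [set w | (s <= Wprod W w)%R]) ((s ^- q)%:E * (G w)%:E))).
  apply: ge0_le_integral => //.
  - by move=> w /= sw; rewrite lee_fin (le_trans (ltW s0)).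
  - by apply/measurable_EFinP; exact: measurable_funTS.
  - apply: emeasurable_funM; first exact: measurable_cst.
    by apply/measurable_EFinP; exact: measurable_funTS.
  - move=> w /= sw; rewrite -EFinM lee_fin /G prodrXl; apply: pt_bound => //.
    exact: le_trans (ler_norm _) (Wprod_norm W w).
apply: (@le_trans _ _ (\int[P]_w ((s ^- q)%:E * (G w)%:E))).
  apply: ge0_subset_integral => //.
  - apply: emeasurable_funM; first exact: measurable_cst.
    by apply/measurable_EFinP.
  - by move=> w _; rewrite mule_ge0 // lee_fin.
rewrite ge0_integralZl_EFin //; last by apply/measurable_EFinP.
apply: lee_wpmul2l; first by rewrite lee_fin.
set n : R := N%:R.
have n0 : (0 < n)%R by rewrite ltr0n.
set a : R := (n^-1 ^+ p)%R.
have a0 : (0 <= a)%R by rewrite exprn_ge0 // invr_ge0 ltW.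
pose E (F : {ffun 'I_T -> {ffun 'I_p -> 'I_N}}) w :=
  (\prod_(k : 'I_T * 'I_N) `|W k.1 k.2 w| ^+ mult (F k.1) k.2)%R.
have eG w : G w = (\sum_F (\prod_(t < T) a) * E F w)%R.
  rewrite /G.
  under eq_bigr do rewrite exprMn powsum mulr_sumr.
  rewrite bigA_distr_bigA; apply: eq_bigr => F _.
  rewrite big_split /=; congr (_ * _)%R.
  by rewrite /E -(pair_big xpredT xpredT (fun t i => `|W t i w| ^+ mult (F t) i)%R).
have mE F : measurable_fun setT (E F).
  apply: measurable_prod => k _; apply: measurable_funX.
  by apply: measurableT_comp => //; exact: mW.
have E0 F w : (0 <= E F w)%R by apply: prodr_ge0 => k _; apply: exprn_ge0.
have pa0 : (0 <= \prod_(t < T) a)%R by apply: prodr_ge0.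
have hE F : \int[P]_w (E F w)%:E <=
    (\prod_(k : 'I_T * 'I_N) c k.1 (mult (F k.1) k.2))%:E.
  apply: (@indep_prod_le _ _ _ _ P (fun k => W k.1 k.2)
    (fun k y => `|y| ^+ mult (F k.1) k.2)%R).
  - by move=> k; exact: mW.
  - exact: ind.
  - by move=> k; apply: measurable_funX; exact: normr_measurable.
  - by move=> k y; apply: exprn_ge0.
  - by move=> k; apply: hc; exact: mult_le.
under eq_integral do rewrite eG -sumEFin.
rewrite ge0_integral_sum //; first last.
- by move=> F w _; rewrite lee_fin mulr_ge0.
- move=> F; apply/measurable_EFinP; apply: measurable_funM; last exact: mE.
  exact: measurable_cst.
apply: (@le_trans _ _ (\sum_(F : {ffun 'I_T -> {ffun 'I_p -> 'I_N}}) ((\prod_(t < T) a) * \prod_(k : 'I_T * 'I_N) c k.1 (mult (F k.1) k.2))%:E)%R).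
  apply: lee_sum => F _.
  under eq_integral do rewrite EFinM.
  rewrite ge0_integralZl_EFin //; last by apply/measurable_EFinP.
    by rewrite EFinM; apply: lee_wpmul2l; rewrite ?lee_fin.
  by move=> x _; rewrite lee_fin.
rewrite sumEFin lee_fin.
have -> : (\sum_(F : {ffun 'I_T -> {ffun 'I_p -> 'I_N}}) ((\prod_(t < T) a) * \prod_(k : 'I_T * 'I_N) c k.1 (mult (F k.1) k.2)) =
   \prod_(t < T) \sum_(f : {ffun 'I_p -> 'I_N}) (a * \prod_i c t (mult f i)))%R.
  rewrite bigA_distr_bigA; apply: eq_bigr => F _.
  rewrite big_split /=; congr (_ * _)%R.
  by rewrite -(pair_big xpredT xpredT (fun t i => c t (mult (F t) i))).
rewrite -prod_const_ord; apply: ler_prod => t _.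
rewrite -mulr_sumr; apply/andP; split.
  apply: mulr_ge0 => //; apply: sumr_ge0 => f _; apply: prodr_ge0 => i _.
  by case/andP: (cB t _ (mult_le f i)).
apply: div_bound => //.
have := @sum_g_bound R N p B (c t) B1 (c0 t) (c1 t) (cB t).
by rewrite mulrA.
by move=> w _; rewrite lee_fin.
Qed.

Local Close Scope ereal_scope.

Local Open Scope ereal_scope.

Lemma law_integral d (Omega : measurableType d) (R : realType)
  (P : probability Omega R) (Y : Omega -> R) (mu : probability R R) (f : R -> \bar R) :
  measurable_fun setT Y -> has_law P Y mu -> measurable_fun setT f ->
  (forall y, 0 <= f y) ->
  \int[P]_w f (Y w) = \int[mu]_y f y.
Proof.
move=> mY hl mf f0.
pose X : {mfun Omega >-> R} := HB.pack Y (isMeasurableFun.Build _ _ _ _ _ mY).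
have := @ge0_integral_distribution _ _ _ _ _ P X f mf f0.
move=> <-; apply: eq_measure_integral => A mA _.
exact: hl.
Qed.

Lemma ae_nonneg (R : realType) (m : probability R R) (f g : R -> \bar R) :
  m [set y | (0 <= y)%R] = 1 -> measurable_fun setT f -> measurable_fun setT g ->
  (forall y, (0 <= y)%R -> f y = g y) ->
  \int[m]_y f y = \int[m]_y g y.
Proof.
move=> h0 mf mg fg; apply: ae_eq_integral => //.
have mD : measurable [set y : R | (0 <= y)%R].
  have -> : [set y : R | (0 <= y)%R] = `[0%R, +oo[%classic.
    by apply/seteqP; split=> y; rewrite /= in_itv /= andbT.
  exact: measurable_itv.
exists (~` [set y : R | (0 <= y)%R]); split.
- exact: measurableC.
- by have := probability_setC m mD; rewrite h0 subee.
- move=> y /= hy hy0; apply: hy => _; exact: fg.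
Qed.

Lemma int_one (R : realType) (m : probability R R) :
  \int[m]_y (1%R)%:E = 1.
Proof.
have := integral_cst m (@measurableT _ R) 1.
rewrite mul1e => h; rewrite -[RHS](probability_setT m) -h //.
Qed.

Lemma absX_le (R : realFieldType) (y : R) k p : (k <= p)%N ->
  (`|y| ^+ k <= 1 + `|y| ^+ p)%R.
Proof.
move=> kp; case: (lerP `|y| 1) => hy.
  apply: (@le_trans _ _ 1%R)%R; first by rewrite exprn_ile1.
  by rewrite lerDl exprn_ge0.
apply: (@le_trans _ _ (`|y| ^+ p)%R); last by rewrite lerDr.
rewrite -(subnKC kp) exprD ler_peMr ?exprn_ge0 //.
by rewrite exprn_ege1 // ltW.
Qed.

Section moments.
Variables (R : realType) (m : probability R R) (p : nat).
Hypothesis h0 : m [set y | (0 <= y)%R] = 1.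
Hypothesis h1 : \int[m]_y (y%:E) = 1.
Hypothesis hp : \int[m]_y ((y ^+ p)%:E) < +oo.

Definition cm k := fine (\int[m]_y ((`|y| ^+ k)%:E)).

Let mabs k : measurable_fun setT (fun y : R => (`|y| ^+ k)%:E).
Proof.
apply/measurable_EFinP; apply: measurable_funX; exact: normr_measurable.
Qed.

Lemma int_absp : \int[m]_y ((`|y| ^+ p)%:E) < +oo.
Proof.
rewrite (@ae_nonneg _ m _ (fun y => (y ^+ p)%:E)) //.
- by apply/measurable_EFinP; apply: measurable_funX.
- by move=> y y0; rewrite ger0_norm.
Qed.

Lemma cm_ge0 k : (0 <= cm k)%R.
Proof. by apply: fine_ge0; apply: integral_ge0 => y _; rewrite lee_fin exprn_ge0. Qed.

Lemma cm_fin k : (k <= p)%N ->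
  \int[m]_y ((`|y| ^+ k)%:E) = (cm k)%:E /\ (cm k <= 1 + cm p)%R.
Proof.
move=> kp.
have ge0 j : 0 <= \int[m]_y ((`|y| ^+ j)%:E).
  by apply: integral_ge0 => y _; rewrite lee_fin exprn_ge0.
have finp : \int[m]_y ((`|y| ^+ p)%:E) \is a fin_num.
  by rewrite ge0_fin_numE //; exact: int_absp.
have le1 : \int[m]_y ((`|y| ^+ k)%:E) <= 1 + \int[m]_y ((`|y| ^+ p)%:E).
  rewrite -(int_one m) -ge0_integralD //.
  apply: ge0_le_integral => //.
    apply: emeasurable_funD => //; exact: measurable_cst.
  by move=> y _; rewrite -EFinD lee_fin absX_le.
have fink : \int[m]_y ((`|y| ^+ k)%:E) \is a fin_num.
  rewrite ge0_fin_numE //; apply: le_lt_trans le1 _.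
  by rewrite -(fineK finp) -EFinD ltry.
split; first by rewrite /cm fineK.
by rewrite -lee_fin EFinD /cm !fineK.
Qed.

Lemma cm0 : cm 0 = 1%R.
Proof. by rewrite /cm; under eq_integral do rewrite expr0; rewrite int_one. Qed.

Lemma cm1 : cm 1 = 1%R.
Proof.
rewrite /cm (@ae_nonneg _ m _ (fun y => y%:E)) ?h1 //.
- exact/measurable_EFinP.
- by move=> y y0; rewrite expr1 ger0_norm.
Qed.

End moments.

Local Close Scope ereal_scope.
Local Open Scope ring_scope.

Unset Implicit Arguments. Set Strict Implicit.

Theorem proposition49 (R : realType) (dX : measure_display)
  (X : measurableType dX) (pi : probability X R) (T p : nat)
  (mu : X -> 'I_T -> probability R R) :
  (0 < T)%N -> (2 <= p)%N ->
  (forall x t, mu x t [set y : R | 0 <= y] = 1%E) ->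
  (forall x t, (\int[mu x t]_y (y%:E) = 1)%E) ->
  (forall x t, (\int[mu x t]_y ((y ^+ p)%:E) < +oo)%E) ->
  exists M : X -> R, (forall x, 0 < M x) /\
  forall (N : nat) (alpha : R), 0 < alpha ->
    alpha * T%:R + 2^-1 + Num.sqrt (alpha * T%:R) <= N%:R ->
  forall (dO : measure_display) (Omega : measurableType dO)
    (P : X -> probability Omega R) (W : X -> 'I_T -> 'I_N -> Omega -> R),
    (forall x t i, measurable_fun setT (W x t i)) ->
    (forall x, mutually_independent (P x)
                 (fun ti : 'I_T * 'I_N => W x ti.1 ti.2)) ->
    (forall x t i, has_law (P x) (W x t i) (mu x t)) ->
  forall s : R, 0 < s ->
    (\int[pi]_x tilted_tail (P x) (Wprod (W x)) s
     <= (s ^- (p - 1))%:E * \int[pi]_x (expR (M x / alpha))%:E)%E.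
Proof.
move=> T0; case: p => [|q] // p2 hpos hmean hmom.
rewrite subn1 /=.
pose K x t := cm (mu x t) q.+1.
pose B x := 1 + \sum_t K x t.
have K0 x t : 0 <= K x t by apply: cm_ge0.
have B1 x : 1 <= B x by rewrite lerDl; apply: sumr_ge0 => t _.
have KB x t : 1 + K x t <= B x.
  rewrite lerD2l (bigD1 t) //= lerDl; apply: sumr_ge0 => j _; exact: K0.
pose M x := B x ^+ q.+1 * q.+1%:R ^+ 2.
exists M; split.
  move=> x; apply: mulr_gt0; apply: exprn_gt0; last by rewrite ltr0Sn.
  exact: lt_le_trans ltr01 (B1 x).
move=> N alpha a0 hN dO Omega P W mW ind law s s0.
have aT : alpha * T%:R <= N%:R.
  apply: le_trans hN; rewrite -addrA lerDl; apply: addr_ge0 => //.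
have N0 : (0 < N)%N.
  rewrite -(ltr0n R); apply: lt_le_trans aT.
  by rewrite mulr_gt0 // ltr0n.
have sq0 : 0 < s ^- q by rewrite invr_gt0 exprn_gt0.
apply: outer_le => //.
  move=> x; apply: integral_ge0 => w /= sw.
  have h : (0 <= Wprod (W x) w)%R by apply: le_trans (ltW s0) sw.
  by rewrite -lee_fin in h.
move=> x.
apply: le_trans (@per_x _ _ _ T N q (P x) (W x) (fun t m => cm (mu x t) m) (B x) s
   N0 s0 (B1 x) (mW x) (ind x) _ _ _ _) _.
- move=> t i m mq.
  rewrite (@law_integral _ _ _ (P x) (W x t i) (mu x t) (fun y => (`|y| ^+ m)%:E)) //.
  + exact: (cm_fin (hpos x t) (hmom x t) mq).1.
  + by apply/measurable_EFinP; apply: measurable_funX; exact: normr_measurable.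
- by move=> t; apply: cm0.
- by move=> t; apply: cm1.
- move=> t [|m] mq; first by rewrite cm0 // expr0 lexx ler01.
  rewrite cm_ge0 /=.
  have [_ h] := cm_fin (hpos x t) (hmom x t) mq.
  apply: le_trans h _; apply: le_trans (KB x t) _.
  by rewrite exprS ler_peMr ?exprn_ege1 // (le_trans ler01 (B1 x)).
apply: lee_wpmul2l; first by rewrite lee_fin ltW.
rewrite lee_fin.
set u := B x ^+ q.+1 * q.+1%:R ^+ 2 / N%:R.
have u0 : 0 <= u.
  by rewrite /u mulr_ge0 ?invr_ge0 // mulr_ge0 // exprn_ge0 // (le_trans ler01 (B1 x)).
apply: (@le_trans _ _ (expR u ^+ T)).
  have := @lerXn2r R T (1 + u) (expR u); rewrite !nnegrE.
  by move=> /(_ (addr_ge0 ler01 u0) (expR_ge0 _) (expR_ge1Dx u)).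
rewrite -expRM_natl ler_expR.
have M0 : 0 <= M x by rewrite mulr_ge0 // exprn_ge0 // (le_trans ler01 (B1 x)).
have Nn0 : 0 < N%:R :> R by rewrite ltr0n.
rewrite /u -/(M x) mulrA mulrC.
have tn : T%:R / N%:R <= alpha^-1.
  rewrite ler_pdivrMr // ler_pdivlMl //.
have -> : N%:R^-1 * (T%:R * M x) = M x * (T%:R / N%:R) by ring.
by rewrite ler_wpM2l.
Qed.
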